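(* Let $R$ be an integral domain and $M$ an $R$-module. If $x,y\in M$ are non-torsion elements and $[x]=[y]\in\mathbb{P}(M)$, then there exist $a,b\in R$ such that $ax=by\neq0$.
   Context: For an $R$-module $M$ let $M^\circ=M\setminus\{0\}$. Define a relation on $M^\circ$ by $x\sim' y$ if there exist $m\in M$ and $r,s\in R$ with $x=rm$ and $y=sm$. Let $\sim$ be the equivalence relation generated by $\sim'$ (i.e. $x\sim y$ iff there is a finite chain $x=x_0\sim'x_1\sim'\cdots\sim'x_n=y$). The projective space is $\mathbb{P}(M)=M^\circ/\sim$, and $[x]$ denotes the class of $x$. An element $x$ is torsion if $rx=0$ for some nonzero $r\in R$. *)

(* Defs.v *)
From HB Require Import structures.
From mathcomp Require Import all_boot all_order all_algebra.
From Stdlib Require Import Relations.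
Set Implicit Arguments. Unset Strict Implicit. Unset Printing Implicit Defensive.
Import GRing.Theory.
Local Open Scope ring_scope.

Definition proj_gen (R : pzRingType) (M : lmodType R) (x y : M) : Prop :=
  x != 0 /\ y != 0 /\ exists (m : M) (r s : R), x = r *: m /\ y = s *: m.

(* ~ : the equivalence relation on M^o generated by ~'
   (reflexive-symmetric-transitive closure; we only use it on nonzero
   elements, where it coincides with the equivalence relation generated
   on M^o). *)
Definition proj_equiv (R : pzRingType) (M : lmodType R) : relation M :=
  clos_refl_sym_trans M (@proj_gen R M).

Definition same_class (R : pzRingType) (M : lmodType R) (x y : M) : Prop :=
  x != 0 /\ y != 0 /\ proj_equiv x y.

Definition torsion (R : pzRingType) (M : lmodType R) (x : M) : Prop :=
  exists r : R, r != 0 /\ r *: x = 0.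

(* Main.v *)
Require Import Defs.
From mathcomp Require Import all_boot all_order all_algebra.
From Stdlib Require Import Relations.
Import GRing.Theory.
Local Open Scope ring_scope.

Section S.
Local Set Implicit Arguments.
Variables (R : idomainType) (M : lmodType R).
Definition E (u v : M) := exists a b : R, a *: u = b *: v /\ a *: u != 0.

Lemma nt_ne0 (u : M) : ~ torsion u -> u != 0.
Proof. move=> H; apply/eqP => u0; apply: H; exists 1; split; [exact: oner_neq0| by rewrite u0 scaler0]. Qed.

Lemma ntE (u v : M) : ~ torsion u -> E u v -> ~ torsion v.
Proof.
move=> Hu [a [b [eq ne]]] [t [t0 tv]]; apply: Hu; exists (t * a); split.
  rewrite mulf_neq0 //; apply: contraNneq ne => ->; by rewrite scale0r.
by rewrite -scalerA eq scalerA mulrC -scalerA tv scaler0.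
Qed.

Lemma Esym (u v : M) : E u v -> E v u.
Proof. move=> [a [b [eq ne]]]; exists b, a; by rewrite -eq. Qed.

Lemma Etrans (u v w : M) : ~ torsion u -> E u v -> E v w -> E u w.
Proof.
move=> Hu [a [b [e1 n1]]] [c [d [e2 n2]]]; exists (c * a), (b * d); split.
  rewrite -scalerA e1 scalerA (mulrC c b). by rewrite -(scalerA b c) e2 scalerA.
rewrite -scalerA; apply/eqP => H; apply: Hu; exists (c * a); split; last by rewrite -scalerA.
rewrite mulf_neq0 //.
  by apply: contraNneq n2 => ->; rewrite scale0r.
by apply: contraNneq n1 => ->; rewrite scale0r.
Qed.

Lemma Estep (u v : M) : proj_gen u v -> ~ torsion u -> E u v.
Proof.
move=> [u0 [v0 [m [r [s [eu ev]]]]]] Hu; exists s, r; split; rewrite ?eu ?ev in u0 v0 Hu *.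
  by rewrite !scalerA mulrC.
apply/eqP => H; apply: Hu; exists s; split => //.
by apply: contraNneq v0 => ->; rewrite scale0r.
Qed.

Lemma gen_sym (u v : M) : proj_gen u v -> proj_gen v u.
Proof. move=> [u0 [v0 [m [r [s [e1 e2]]]]]]; split=>//; split=>//; by exists m, s, r. Qed.

Lemma main (u v : M) : proj_equiv u v ->
  (~ torsion u -> ~ torsion v /\ E u v) /\ (~ torsion v -> ~ torsion u /\ E v u).
Proof.
elim => {u v}.
- move=> u v H; split=> Hn.
    have e := Estep H Hn; split=> //; exact: ntE e.
  have e := Estep (gen_sym H) Hn; split=> //; exact: ntE e.
- move=> u; split=> Hn; split=> //; exists 1, 1; split=>//; rewrite scale1r; exact: nt_ne0.
- move=> u v _ [H1 H2]; by split.
- move=> u v w _ [A1 A2] _ [B1 B2]; split=> Hn.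
    have [nv e1] := A1 Hn; have [nw e2] := B1 nv; split=>//; exact: Etrans e1 e2.
  have [nv e1] := B2 Hn; have [nu e2] := A2 nv; split=>//; exact: Etrans e1 e2.
Qed.
End S.

Theorem theorem4p3 (R : idomainType) (M : lmodType R) (x y : M) :
  ~ torsion x -> ~ torsion y -> same_class x y ->
  exists a b : R, a *: x = b *: y /\ a *: x != 0.
Proof.
move=> Hx _ [_ [_ H]]; have [A _] := main H; by have [_ e] := A Hx.
Qed.
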